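(* For every integer $n>0$, the diffeological space $\mathbb{TD}^n$ is not reflexive: there is a parametrization $f:(-1,1)\to\mathbb{TD}^n$ such that $g\circ f$ is smooth for every smooth function $g:\mathbb{TD}^n\to\mathbb{R}$, but $f$ is not a plot of $\mathbb{TD}^n$.
   Context: Define $\pi^n_{set}:\mathbb{R}^n\to\mathbb{R}^n$ by $\pi^n_{set}(v)=v$ if $\|v\|\le1$ and $\pi^n_{set}(v)=v/\|v\|$ if $\|v\|\ge1$. Let $\mathbb{TD}^n=\mathbb{R}^n/\!\sim$, where $v\sim w$ iff $\pi^n_{set}(v)=\pi^n_{set}(w)$, equipped with the quotient diffeology from $\mathbb{R}^n$ (so the projection $\pi_n:\mathbb{R}^n\to\mathbb{TD}^n$ is a subduction). A parametrization is a map from an open subset of a Euclidean space; a diffeological space is reflexive if every parametrization $P$ such that $g\circ P$ is smooth for all smooth $g$ into $\mathbb{R}$ is a plot. *)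

(* Defs.v *)
From HB Require Import structures.
From mathcomp Require Import all_boot all_order all_algebra.
From mathcomp Require Import all_classical all_reals topology normedtype derive.
Set Implicit Arguments. Unset Strict Implicit. Unset Printing Implicit Defensive.
Import Order.TTheory GRing.Theory Num.Theory.
Import numFieldNormedType.Exports.
Local Open Scope classical_set_scope.
Local Open Scope ring_scope.

Section Diffeology.
Variable R : realType.

Fixpoint Ck (V W : normedModType R) (m : nat) (U : set V) (f : V -> W) : Prop :=
  match m with
  | 0 => forall x, U x -> {for x, continuous f}
  | m'.+1 => (forall x, U x -> differentiable f x) /\
             (forall v : V, Ck m' U (fun x => 'D_v f x))
  end.

Definition smooth_on (V W : normedModType R) (U : set V) (f : V -> W) : Prop :=
  forall m, Ck m U f.

Definition enorm n (v : 'rV[R]_n) : R := Num.sqrt (\sum_(i < n) v 0 i ^+ 2).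

Definition pi_set n (v : 'rV[R]_n) : 'rV[R]_n :=
  if enorm v <= 1 then v else (enorm v)^-1 *: v.

(* TD^n = R^n / ~ , realised literally as the type of equivalence classes *)
Definition TD n : Type :=
  {A : set 'rV[R]_n | exists v : 'rV[R]_n, A = [set w | pi_set w = pi_set v]}.

Definition piTD n (v : 'rV[R]_n) : TD n :=
  exist _ [set w | pi_set w = pi_set v] (ex_intro _ v erefl).

(* Plots of the quotient diffeology: parametrizations P : U -> TD^n
   (U open in R^k; P is a total function whose values off U are irrelevant)
   that locally lift along pi_n to smooth maps into R^n. *)
Definition plotTD n k (U : set 'rV[R]_k) (P : 'rV[R]_k -> TD n) : Prop :=
  forall r, U r -> exists V : set 'rV[R]_k,
    [/\ open V, V r, V `<=` U &
     exists Q : 'rV[R]_k -> 'rV[R]_n,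
       smooth_on V Q /\ forall x, V x -> piTD (Q x) = P x].

Definition smoothTD n (g : TD n -> R) : Prop :=
  forall k (U : set 'rV[R]_k) (P : 'rV[R]_k -> TD n),
    open U -> plotTD U P -> smooth_on U (g \o P).

Definition reflexiveTD n : Prop :=
  forall k (U : set 'rV[R]_k) (P : 'rV[R]_k -> TD n), open U ->
    (forall g : TD n -> R, smoothTD g -> smooth_on U (g \o P)) ->
    plotTD U P.

Definition interval11 : set 'rV[R]_1 := [set x | -1 < x 0 0 < 1].

End Diffeology.
Arguments interval11 R : clear implicits.

(* Main.v *)
Require Import Defs.
From HB Require Import structures.
From mathcomp Require Import all_boot all_order all_algebra.
From mathcomp Require Import all_classical all_reals topology normedtype derive.
From mathcomp Require Import lra.
Import Order.TTheory GRing.Theory Num.Theory.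
Import numFieldNormedType.Exports.
Local Open Scope classical_set_scope.
Local Open Scope ring_scope.

Section H.
Variable R : realType.
Implicit Types V W : normedModType R.

Lemma Ck_mono V W m (U1 U2 : set V) (f : V -> W) :
  U2 `<=` U1 -> Ck m U1 f -> Ck m U2 f.
Proof.
move=> sU; elim: m f => [|m IH] f /=.
  by move=> h x /sU; exact: h.
by move=> [h1 h2]; split => [x /sU|v]; [exact: h1|exact: IH].
Qed.

Lemma Ck_cst V W m (U : set V) (c : W) : Ck m U (fun _ => c).
Proof.
elim: m c => [|m IH] c /=.
  by move=> x _; exact: cst_continuous.
split => [x _|v]; first exact: differentiable_cst.
have -> : (fun x => 'D_v (fun=> c) x) = (fun _ => 0 : W).
  by apply: funext => x; exact: (derive_cst c x v).
exact: IH.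
Qed.

Lemma Ck_add V W m (f g : V -> W) :
  Ck m setT f -> Ck m setT g -> Ck m setT (fun x => f x + g x).
Proof.
elim: m f g => [|m IH] f g /=.
  by move=> hf hg x _; apply: continuousD; [exact: hf|exact: hg].
move=> [df hf] [dg hg]; split => [x _|v].
  exact: differentiableD (df x I) (dg x I).
have -> : (fun x => 'D_v (fun x => f x + g x) x) =
   (fun x => 'D_v f x + 'D_v g x).
  apply: funext => x.
  by rewrite -(deriveD (@diff_derivable _ _ _ _ _ v (df x I)) (@diff_derivable _ _ _ _ _ v (dg x I))).
exact: IH.
Qed.

Lemma Ck_lin V W m (L : {linear V -> W}) : continuous L -> Ck m setT L.
Proof.
move=> cL; case: m => [|m] /=; first by move=> x _; exact: cL.
split => [x _|v]; first exact: linear_differentiable.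
have -> : (fun x => 'D_v L x) = (fun _ => L v).
  apply: funext => x; rewrite deriveE; last exact: linear_differentiable.
  by rewrite diff_lin.
exact: Ck_cst.
Qed.

End H.

Section K.
Variable R : realType.

Lemma right_punct {T : Type} {q : R -> T} {F : set_system T} :
  q @ 0^' `=>` F -> q @ 0^'+ `=>` F.
Proof.
move=> h P /h /=; rewrite /nbhs /= /dnbhs /within /=.
apply: filterS => x hx x0; apply: hx; exact: lt0r_neq0.
Qed.

Lemma left_punct {T : Type} {q : R -> T} {F : set_system T} :
  q @ 0^' `=>` F -> q @ 0^'- `=>` F.
Proof.
move=> h P /h /=; rewrite /nbhs /= /dnbhs /within /=.
apply: filterS => x hx x0; apply: hx; exact: ltr0_neq0.
Qed.

Lemma side_lim {N} {F : set_system R} {PF : ProperFilter F} {q : R -> 'rV[R]_N}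
  {w a D : 'rV[R]_N} :
  (fun h => h) @ F --> (0:R) -> q @ F --> D ->
  (\forall h \near F, h != 0 /\ q h = h^-1 *: w + a) -> w = 0 /\ D = a.
Proof.
move=> hid hq hev.
have h1 : (fun h => h *: q h) @ F --> 0 *: D by apply: cvgZ.
have h2 : (fun h => w + h *: a) @ F --> w + 0 *: a.
  by apply: cvgD; [exact: cvg_cst | apply: cvgZ => //; exact: cvg_cst].
have h3 : (fun h => h *: q h) @ F --> w + 0 *: a.
  apply: cvg_trans h2; apply: near_eq_cvg; apply: filterS hev.
  move=> h [h0 ->]; by rewrite scalerDr scalerA mulfV // scale1r.
have w0 : w = 0.
  have := cvg_unique _ h1 h3; rewrite !scale0r addr0 => <- //.
split => //.
have h4 : q @ F --> a.
  apply: cvg_near_cst; apply: filterS hev => h [_ ->]; by rewrite w0 scaler0 add0r.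
exact: cvg_unique _ hq h4.
Qed.

Lemma near_right {P : R -> Prop} :
  (\forall h \near 0^', P h) -> \forall h \near 0^'+, P h.
Proof.
move=> hP; apply: (right_punct (q:=id) (F:=nbhs (0:R)^')) => //.
Qed.

Lemma near_left {P : R -> Prop} :
  (\forall h \near 0^', P h) -> \forall h \near 0^'-, P h.
Proof.
move=> hP; apply: (left_punct (q:=id) (F:=nbhs (0:R)^')) => //.
Qed.

Lemma kink N (Q : 'rV[R]_1 -> 'rV[R]_N) (u : 'rV[R]_N) :
  u != 0 ->
  (\forall h \near (0:R)^', Q (h *: (const_mx 1 : 'rV[R]_1)) = (1 - `|h|) *: u) ->
  ~ derivable Q 0 (const_mx 1).
Proof.
move=> u0 hQ; rewrite /derivable => hD.
set D := lim _ in hD.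
set c := Q 0 in hD.
have hr : \forall h \near 0^'+, h != 0 /\
    h^-1 *: ((Q \o shift 0) (h *: const_mx 1) - c) = h^-1 *: (u - c) + - u.
  move: (nbhs_right_gt (0:R)) (near_right hQ); apply: filterS2 => h h0 hq.
  split; first exact: lt0r_neq0.
  rewrite /= addr0 hq gtr0_norm // scalerBl scale1r.
  by rewrite addrAC scalerBr scalerA mulVf ?lt0r_neq0 // scale1r.
have hl : \forall h \near 0^'-, h != 0 /\
    h^-1 *: ((Q \o shift 0) (h *: const_mx 1) - c) = h^-1 *: (u - c) + u.
  move: (nbhs_left_lt (0:R)) (near_left hQ); apply: filterS2 => h h0 hq.
  split; first exact: ltr0_neq0.
  rewrite /= addr0 hq ltr0_norm // opprK scalerDl scale1r.
  by rewrite addrAC scalerDr scalerA mulVf ?ltr0_neq0 // scale1r.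
have [_ Dr] := side_lim (cvg_at_right_filter cvg_id) (right_punct hD) hr.
have [_ Dl] := side_lim (cvg_at_left_filter cvg_id) (left_punct hD) hl.
have uu : u = - u by rewrite -Dr Dl.
have : (2:R) *: u == 0 by rewrite scaler_nat mulr2n {1}uu addNr.
by rewrite scaler_eq0 pnatr_eq0 /= (negbTE u0).
Qed.
End K.

Section M.
Variable R : realType.

Lemma exist_eq (T : Type) (P : T -> Prop) a b (p : P a) (q : P b) :
  a = b -> exist P a p = exist P b q.
Proof. move=> ab; subst; congr exist; exact: Prop_irrelevance. Qed.

Lemma piTD_eq n (v w : 'rV[R]_n) : pi_set v = pi_set w -> piTD v = piTD w.
Proof. by move=> e; apply: exist_eq; rewrite e. Qed.

Lemma piTD_inj n (v w : 'rV[R]_n) : piTD v = piTD w -> pi_set v = pi_set w.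
Proof.
move=> /(f_equal (@proj1_sig _ _)) /= e.
have : [set x | pi_set x = pi_set v] v by [].
by rewrite e.
Qed.

Lemma enormZ n (k : R) (w : 'rV[R]_n) : enorm (k *: w) = `|k| * enorm w.
Proof.
rewrite /enorm; under eq_bigr do rewrite mxE exprMn.
by rewrite -mulr_sumr sqrtrM ?sqr_ge0 // sqrtr_sqr.
Qed.

Definition uu N : 'rV[R]_N.+1 := delta_mx 0 ord0.

Lemma enorm_u N : enorm (uu N) = 1.
Proof.
rewrite /enorm big_ord_recl !mxE eqxx /= expr1n big1 ?addr0 ?sqrtr1 // => i _.
by rewrite /uu mxE eqxx eq_sym (negbTE (neq_lift _ _)) /= expr0n.
Qed.

Lemma uu_neq0 N : uu N != 0.
Proof.
apply/eqP => /matrixP /(_ 0 0); rewrite !mxE eqxx /= => /eqP.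
by rewrite oner_eq0.
Qed.

Lemma pi_set_small N (s : R) : 0 <= s <= 1 -> pi_set (s *: uu N) = s *: uu N.
Proof.
move=> /andP [s0 s1].
by rewrite /pi_set enormZ enorm_u mulr1 ger0_norm // s1.
Qed.

Lemma pi_set_big N (s : R) : 1 <= s -> pi_set (s *: uu N) = uu N.
Proof.
move=> s1; have s0 : 0 < s by apply: lt_le_trans s1.
rewrite /pi_set enormZ enorm_u mulr1 gtr0_norm //.
case: ifP => [s1' | _].
  have -> : s = 1 by apply/eqP; rewrite eq_le s1 s1'.
  by rewrite scale1r.
by rewrite scalerA mulVf ?gt_eqF // scale1r.
Qed.

Lemma pi_set_inv N (s : R) (w : 'rV[R]_N.+1) :
  0 <= s < 1 -> pi_set w = s *: uu N -> w = s *: uu N.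
Proof.
move=> /andP [s0 s1]; rewrite /pi_set; case: ifP => // /negbT.
rewrite -ltNge => w1 e.
have w0 : 0 < enorm w by apply: lt_trans w1.
have := f_equal (@enorm _ _) e.
rewrite !enormZ enorm_u mulr1 (ger0_norm s0) ger0_norm ?invr_ge0 ?ltW // (mulVf (lt0r_neq0 w0)) => s1'.
by move: s1; rewrite -s1' ltxx.
Qed.

End M.

Section L.
Variable R : realType.
Variable M : nat.

Definition Lc (w : 'rV[R]_M) : 'rV[R]_1 -> 'rV[R]_M := fun x => x 0 0 *: w.

Lemma Lc_lin w : linear (Lc w).
Proof. by move=> a x y; rewrite /Lc !mxE scalerDl scalerA. Qed.

HB.instance Definition _ w := GRing.isLinear.Build R 'rV[R]_1 'rV[R]_M _ (Lc w) (Lc_lin w).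

Lemma Lc_cont w : continuous (Lc w).
Proof. move=> x; apply: continuousZr_tmp; exact: coord_continuous. Qed.

Lemma smooth_aff (a w : 'rV[R]_M) : smooth_on setT (fun x : 'rV[R]_1 => a + x 0 0 *: w).
Proof.
move=> m; apply: Ck_add; first exact: Ck_cst.
exact: (@Ck_lin R _ _ m (Lc w : {linear 'rV[R]_1 -> 'rV[R]_M}) (Lc_cont w)).
Qed.

End L.

Theorem proposition8p3 (R : realType) (n : nat) (hn : (0 < n)%N) :
  ~ reflexiveTD R n /\
  exists f : 'rV[R]_1 -> TD R n,
    (forall g : TD R n -> R, smoothTD g -> smooth_on (interval11 R) (g \o f)) /\
    ~ plotTD (interval11 R) f.
Proof.
case: n hn => // N _.
pose u := uu R N.
pose f := fun x : 'rV[R]_1 => piTD ((1 - `|x 0 0|) *: u).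
have pu : pi_set u = u by rewrite -{1}(scale1r u) pi_set_big.
have smf : forall g : TD R N.+1 -> R, smoothTD g -> smooth_on (interval11 R) (g \o f).
  move=> g hg.
  have plot_aff : forall a w : 'rV[R]_N.+1,
      plotTD setT (fun x : 'rV[R]_1 => piTD (a + x 0 0 *: w)).
    move=> a w r _; exists setT; split => //; first exact: openT.
    exists (fun x => a + x 0 0 *: w); split => //; exact: smooth_aff.
  have s1 := hg 1%N setT _ openT (plot_aff u (- u)).
  have s2 := hg 1%N setT _ openT (plot_aff u u).
  have -> : g \o f = fun x => (g (piTD (u + x 0 0 *: - u)) +
      g (piTD (u + x 0 0 *: u))) + (- g (piTD u)).
    apply: funext => x /=; rewrite /f.
    have e1 : u + x 0 0 *: - u = (1 - x 0 0) *: u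
      by rewrite scalerN scalerBl scale1r.
    have e2 : u + x 0 0 *: u = (1 + x 0 0) *: u by rewrite scalerDl scale1r.
    rewrite e1 e2; case: (leP 0 (x 0 0)) => hx.
    - rewrite (ger0_norm hx) (@piTD_eq _ _ ((1 + x 0 0) *: u) u); last first.
        by rewrite pi_set_big ?lerDl.
      by rewrite addrK.
    - rewrite (ltr0_norm hx) opprK (@piTD_eq _ _ ((1 - x 0 0) *: u) u); last first.
        by rewrite pi_set_big // lerDl oppr_ge0 ltW.
      by rewrite [RHS]addrC addKr.
  move=> m; apply: (@Ck_mono R _ _ m setT) => //.
  apply: Ck_add; last exact: Ck_cst.
  by apply: Ck_add; [exact: s1 | exact: s2].
have nonplot : ~ plotTD (interval11 R) f.
  move=> hp.
  have U0 : interval11 R 0.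
    rewrite /interval11 /= mxE; apply/andP; split; last exact: ltr01.
    by rewrite ltrNl oppr0 ltr01.
  have [V [oV V0 VU [Q [sQ hQ]]]] := hp 0 U0.
  have dQ : differentiable Q 0 := (sQ 1%N).1 0 V0.
  have K := @kink R N.+1 Q u (uu_neq0 R N).
  apply: K; last exact: diff_derivable.
  have nV : \forall h \near (0:R), V (h *: (const_mx 1 : 'rV[R]_1)).
    have c0 : (fun h : R => h *: (const_mx 1 : 'rV[R]_1)) @ 0 --> (0 : 'rV[R]_1).
      rewrite -(scale0r (const_mx 1 : 'rV[R]_1)); apply: cvgZr_tmp; exact: cvg_id.
    by apply: c0; apply: open_nbhs_nbhs; split.
  rewrite /nbhs /= /dnbhs /within /=.
  move: nV; apply: filterS => h hV h0.
  have x00 : (h *: (const_mx 1 : 'rV[R]_1)) 0 0 = h by rewrite !mxE mulr1.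
  have hb := VU _ hV; rewrite /interval11 /= x00 in hb.
  have hn1 : `|h| < 1 by rewrite ltr_norml.
  have hn0 : 0 < `|h| by rewrite normr_gt0.
  have := hQ _ hV; rewrite /f x00 => /piTD_inj.
  rewrite pi_set_small; last by apply/andP; split; lra.
  by apply: pi_set_inv; apply/andP; split; lra.
split; last by exists f.
move=> refl; apply: nonplot; apply: refl => //.
have -> : interval11 R = (fun x : 'rV[R]_1 => x 0 0) @^-1` `](-1), 1[.
  by apply: funext => x; rewrite /interval11 /= in_itv.
by apply/(continuousP _).1; [exact: coord_continuous | exact: itv_open].
Qed.
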